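(* Let $(\mathscr{P},\mathscr{B},\mathrm{I})$ be a linear space with incidence graph $\Gamma$, and let $\varphi$ be a gain function on $\Gamma$ with gain group $G$ acting on the left on a nonempty set $\Lambda$. Let $p,q\in\mathscr{P}$, $b\in\mathscr{B}$ and $\lambda,\mu\in\Lambda$. In $\mathfrak{M}(\Gamma,\varphi)$: (1) if $p=q$, then $d(x_p,z_{q,\lambda})=1$ and $(x_p,z_{q,\lambda})$ is the unique $1$-chain from $x_p$ to $z_{q,\lambda}$; (2) if $p\ne q$, then $d(x_p,z_{q,\lambda})=3$ and there is a unique $3$-chain from $x_p$ to $z_{q,\lambda}$; (3) if $b\ \mathrm{I}\ p$ and $\mu=\varphi(bp)\cdot\lambda$, then $d(y_{b,\lambda},z_{p,\mu})=1$ and $(y_{b,\lambda},z_{p,\mu})$ is the unique $1$-chain from $y_{b,\lambda}$ to $z_{p,\mu}$; (4) if $b\ \mathrm{I}\ p$ and $\mu\ne\varphi(bp)\cdot\lambda$, then $d(y_{b,\lambda},z_{p,\mu})=3$ and there is a unique $3$-chain from $y_{b,\lambda}$ to $z_{p,\mu}$.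
   Context: An incidence structure is a triple $(\mathscr{P},\mathscr{B},\mathrm{I})$ where $\mathscr{P}$ (points) and $\mathscr{B}$ (lines) are nonempty disjoint sets and $\mathrm{I}\subseteq\mathscr{P}\times\mathscr{B}$ is a nonempty incidence relation; write $p\ \mathrm{I}\ b$ when $(p,b)\in\mathrm{I}$. It is a linear space if any two distinct points are incident with exactly one common line, each line is incident with at least two points, and some point and line are not incident. The incidence graph $\Gamma$ is the bipartite graph with vertex set $\mathscr{P}\cup\mathscr{B}$ and an edge $bp$ for each incident pair; every edge is oriented from its line to its point. A gain function with gain group $G$ assigns to each edge $e$ an element $\varphi(e)\in G$. The group $G$ acts on $\Lambda$ on the left. Construction $\mathfrak{M}(\Gamma,\varphi)$: the incidence structure whose points are the formal symbols $x_p$ ($p\in\mathscr{P}$) and $y_{b,\lambda}$ ($b\in\mathscr{B},\lambda\in\Lambda$), whose lines are the formal symbols $z_{p,\lambda}$ ($p\in\mathscr{P},\lambda\in\Lambda$), and whose incidences are exactly: $x_p$ incident with $z_{p,\lambda}$ for all $\lambda$, and $y_{b,\lambda}$ incident with $z_{p,\mu}$ whenever $b\ \mathrm{I}\ p$ and $\mu=\varphi(bp)\cdot\lambda$. A $k$-chain is a sequence $(u_0,\dots,u_k)$ of points/lines with $u_i$ incident with $u_{i-1}$ for $1\le i\le k$; $d(u,v)$ is the least $k$ such that a $k$-chain from $u$ to $v$ exists ($\infty$ if none). *)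

(* Defs.v *)
From Stdlib Require Import List.
Import ListNotations.
Set Implicit Arguments.

Definition is_incidence_structure (P B : Type) (I : P -> B -> Prop) : Prop :=
  inhabited P /\ inhabited B /\ (exists p b, I p b).

Definition is_linear_space (P B : Type) (I : P -> B -> Prop) : Prop :=
  is_incidence_structure I /\
  (forall p q : P, p <> q -> exists! b : B, I p b /\ I q b) /\
  (forall b : B, exists p q : P, p <> q /\ I p b /\ I q b) /\
  (exists (p : P) (b : B), ~ I p b).

Definition is_group (G : Type) (mul : G -> G -> G) (one : G) (inv : G -> G) : Prop :=
  (forall x y z, mul x (mul y z) = mul (mul x y) z) /\
  (forall x, mul one x = x) /\ (forall x, mul x one = x) /\
  (forall x, mul (inv x) x = one) /\ (forall x, mul x (inv x) = one).

Definition is_left_action (G L : Type) (mul : G -> G -> G) (one : G)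
  (act : G -> L -> L) : Prop :=
  (forall l, act one l = l) /\
  (forall g h l, act (mul g h) l = act g (act h l)).

Definition inc_elt (P B : Type) (I : P -> B -> Prop) (u v : P + B) : Prop :=
  match u, v with
  | inl p, inr b => I p b
  | inr b, inl p => I p b
  | _, _ => False
  end.

Fixpoint walk (E : Type) (adj : E -> E -> Prop) (u : E) (s : list E) (v : E) : Prop :=
  match s with
  | [] => u = v
  | w :: s' => adj u w /\ walk adj w s' v
  end.

Definition is_chain (P B : Type) (I : P -> B -> Prop) (k : nat) (u v : P + B)
  (c : list (P + B)) : Prop :=
  exists s, c = u :: s /\ length s = k /\ walk (inc_elt I) u s v.

Definition dist_is (P B : Type) (I : P -> B -> Prop) (u v : P + B) (k : nat) : Prop :=
  (exists c, is_chain I k u v c) /\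
  (forall j c, is_chain I j u v c -> k <= j).

Section M.
Variables (P B G L : Type) (I : P -> B -> Prop) (phi : B -> P -> G)
  (act : G -> L -> L).

Inductive Mpoint : Type :=
  | Mx : P -> Mpoint
  | My : B -> L -> Mpoint.

Inductive Mline : Type :=
  | Mz : P -> L -> Mline.

Definition MI (u : Mpoint) (z : Mline) : Prop :=
  match u, z with
  | Mx p, Mz q _ => p = q
  | My b l, Mz p m => I p b /\ m = act (phi b p) l
  end.
End M.

Arguments Mx {P B L}.
Arguments My {P B L}.
Arguments Mz {P L}.

(* Main.v *)
Require Import Defs.
From Stdlib Require Import List Lia Classical.
Import ListNotations.

Lemma act_inj G (mul : G -> G -> G) one inv L (act : G -> L -> L)
  (HG : is_group mul one inv) (Ha : is_left_action mul one act) g (a b : L) :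
  act g a = act g b -> a = b.
Proof.
  intro H. destruct HG as (_&_&_&Hinv&_). destruct Ha as (H1&H2).
  rewrite <- (H1 a), <- (H1 b), <- (Hinv g), !H2, H. reflexivity.
Qed.

Theorem lemma3 (P B : Type) (I : P -> B -> Prop) (HI : is_linear_space I)
  (G : Type) (mul : G -> G -> G) (one : G) (inv : G -> G)
  (HG : is_group mul one inv)
  (L : Type) (act : G -> L -> L) (Hact : is_left_action mul one act)
  (HL : inhabited L)
  (phi : B -> P -> G)
  (p q : P) (b : B) (l m : L) :
  let MIinc := MI (B := B) I phi act in
  let x := fun r : P => @inl (Mpoint P B L) (Mline P L) (Mx r) in
  let y := fun (c : B) (n : L) => @inl (Mpoint P B L) (Mline P L) (My c n) in
  let z := fun (r : P) (n : L) => @inr (Mpoint P B L) (Mline P L) (Mz r n) in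
  (p = q ->
     dist_is MIinc (x p) (z q l) 1 /\
     (forall c, is_chain MIinc 1 (x p) (z q l) c <-> c = [x p; z q l])) /\
  (p <> q ->
     dist_is MIinc (x p) (z q l) 3 /\
     (exists! c, is_chain MIinc 3 (x p) (z q l) c)) /\
  (I p b -> m = act (phi b p) l ->
     dist_is MIinc (y b l) (z p m) 1 /\
     (forall c, is_chain MIinc 1 (y b l) (z p m) c <-> c = [y b l; z p m])) /\
  (I p b -> m <> act (phi b p) l ->
     dist_is MIinc (y b l) (z p m) 3 /\
     (exists! c, is_chain MIinc 3 (y b l) (z p m) c)).
Proof.
  cbv zeta.
  destruct HI as (_ & Huniq & _ & _).
  pose proof (@act_inj G mul one inv L act HG Hact) as Hinj.
  split; [|split; [|split]].
  - intro Hpq; subst q. split; [split|].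
    + exists [inl (Mx p); inr (Mz p l)]. exists [inr (Mz p l)]. simpl; auto.
    + intros j c (s & -> & Hlen & Hw). destruct s as [|w s]; simpl in *; [discriminate|lia].
    + intros c; split.
      * intros (s & -> & Hlen & Hw).
        destruct s as [|w [|w' s]]; simpl in Hlen; try lia.
        simpl in Hw. destruct Hw as (_ & ->). reflexivity.
      * intros ->. exists [inr (Mz p l)]. simpl; auto.
  - intro Hpq.
    destruct (Huniq p q Hpq) as (c0 & (Hpc & Hqc) & Huc).
    set (nu := act (inv (phi c0 q)) l).
    assert (Hnu : act (phi c0 q) nu = l).
    { unfold nu. destruct Hact as (A1 & A2). destruct HG as (_&_&_&_&Hv).
      rewrite <- A2, Hv, A1. reflexivity. }
    assert (Hch : is_chain (MI I phi act) 3 (inl (Mx p)) (inr (Mz q l))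
       [inl (Mx p); inr (Mz p (act (phi c0 p) nu)); inl (My c0 nu); inr (Mz q l)]).
    { eexists; split; [reflexivity|]. simpl. auto 10. }
    split; [split|].
    + eauto.
    + intros j c (s & -> & Hlen & Hw).
      destruct s as [|w1 [|w2 [|w3 s]]]; simpl in Hlen; try lia; simpl in Hw.
      * discriminate.
      * destruct Hw as (H1 & ->). simpl in H1. congruence.
      * destruct Hw as (H1 & H2 & ->). destruct w1 as [w1|w1]; simpl in *; tauto.
    + exists [inl (Mx p); inr (Mz p (act (phi c0 p) nu)); inl (My c0 nu); inr (Mz q l)].
      split; [exact Hch|].
      intros c' (s & -> & Hlen & Hw).
      destruct s as [|w1 [|w2 [|w3 [|? ?]]]]; simpl in Hlen; try lia.
      simpl in Hw. destruct Hw as (H1 & H2 & H3 & ->).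
      destruct w1 as [w1|[r mu]]; simpl in H1; [tauto|]. subst r.
      destruct w2 as [[r|c nu']|w2]; simpl in H2, H3; [congruence| |tauto].
      destruct H2 as (Hpc' & Hmu), H3 as (Hqc' & Hl).
      assert (c0 = c) by (apply Huc; auto). subst c.
      assert (nu' = nu) by (apply (Hinj (phi c0 q)); congruence). subst nu' mu.
      reflexivity.
  - intros Hpb Hm. subst m. split; [split|].
    + exists [inl (My b l); inr (Mz p (act (phi b p) l))]. exists [inr (Mz p (act (phi b p) l))].
      simpl; auto.
    + intros j c (s & -> & Hlen & Hw). destruct s as [|w s]; simpl in *; [discriminate|lia].
    + intros c; split.
      * intros (s & -> & Hlen & Hw).
        destruct s as [|w [|w' s]]; simpl in Hlen; try lia.
        simpl in Hw. destruct Hw as (_ & ->). reflexivity.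
      * intros ->. eexists; split; [reflexivity|]. simpl; auto.
  - intros Hpb Hm.
    assert (Hch : is_chain (MI I phi act) 3 (inl (My b l)) (inr (Mz p m))
       [inl (My b l); inr (Mz p (act (phi b p) l)); inl (Mx p); inr (Mz p m)]).
    { eexists; split; [reflexivity|]. simpl. auto 10. }
    split; [split|].
    + eauto.
    + intros j c (s & -> & Hlen & Hw).
      destruct s as [|w1 [|w2 [|w3 s]]]; simpl in Hlen; try lia; simpl in Hw.
      * discriminate.
      * destruct Hw as (H1 & ->). simpl in H1. tauto.
      * destruct Hw as (H1 & H2 & ->). destruct w1 as [w1|w1]; simpl in *; tauto.
    + eexists; split; [exact Hch|].
      intros c' (s & -> & Hlen & Hw).
      destruct s as [|w1 [|w2 [|w3 [|? ?]]]]; simpl in Hlen; try lia.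
      simpl in Hw. destruct Hw as (H1 & H2 & H3 & ->).
      destruct w1 as [w1|[r mu]]; simpl in H1; [tauto|]. destruct H1 as (Hrb & Hmu).
      destruct w2 as [[s|c nu']|w2]; simpl in H2, H3; [|exfalso|tauto].
      * subst s r mu. reflexivity.
      * destruct H2 as (Hrc & Hmu'), H3 as (Hpc & Hm').
        destruct (classic (r = p)) as [Hrp|Hrp].
        -- subst r. apply Hm. congruence.
        -- destruct (Huniq r p Hrp) as (c0 & _ & Huc).
           assert (c0 = b) by (apply Huc; auto).
           assert (c0 = c) by (apply Huc; auto). subst c b.
           assert (nu' = l) by (apply (Hinj (phi c0 r)); congruence). subst nu'.
           apply Hm; exact Hm'.
Qed.
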